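(* For every $0<p<2$ there exist a separable Hilbert space $\mathcal{H}$, a finite collection $\mathcal{A}$ of observables on $\mathcal{H}$, and states $\rho,\tau,\omega\in\mathcal{S}(\mathcal{H})$ such that $$d_{\mathcal{A},p}(\rho,\omega)>d_{\mathcal{A},p}(\rho,\tau)+d_{\mathcal{A},p}(\tau,\omega).$$
   Context: For a Hilbert space $\mathcal{H}$, $\mathcal{S}(\mathcal{H})$ is the set of positive trace-class operators with unit trace (states); observables are self-adjoint operators. For an operator $A$ on $\mathcal{H}$, $A^T$ is the operator on the dual $\mathcal{H}^*$ given by $(A^T\eta)(\varphi)=\eta(A\varphi)$. Couplings: $\mathcal{C}(\rho,\omega)=\{\Pi\in\mathcal{S}(\mathcal{H}\otimes\mathcal{H}^* ): \mathrm{tr}_{\mathcal{H}^*}[\Pi]=\omega,\ \mathrm{tr}_{\mathcal{H}}[\Pi]=\rho^T\}$. For a finite collection $\mathcal{A}=\{A_1,\dots,A_K\}$ of observables and $0<p<\infty$, $C_{\mathcal{A},p}=\sum_{k=1}^K|A_k\otimes I^T-I\otimes A_k^T|^p$, $D_{\mathcal{A},p}(\rho,\omega)=\big(\inf_{\Pi\in\mathcal{C}(\rho,\omega)}\mathrm{tr}[\Pi C_{\mathcal{A},p}]\big)^{\min\{1/p,1\}}$, and $$d_{\mathcal{A},p}(\rho,\omega)=\Big(D_{\mathcal{A},p}^{\max\{p,1\}}(\rho,\omega)-\tfrac12\big(D_{\mathcal{A},p}^{\max\{p,1\}}(\rho,\rho)+D_{\mathcal{A},p}^{\max\{p,1\}}(\omega,\omega)\big)\Big)^{\min\{1/p,1\}}.$$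 *)

(* Defs.v *)
From HB Require Import structures.
From mathcomp Require Import all_boot all_order all_algebra.
From mathcomp Require Import complex mxtens spectral.
From mathcomp Require Import all_classical all_reals.
From mathcomp Require Import exp.
Set Implicit Arguments. Unset Strict Implicit. Unset Printing Implicit Defensive.
Import Order.TTheory GRing.Theory Num.Theory.
Local Open Scope ring_scope.
Local Open Scope classical_set_scope.

Section QOT.
Variable R : realType.
Local Notation C := (complex R).

Definition adj m n (A : 'M[C]_(m, n)) : 'M[C]_(n, m) := map_mx (@Num.conj C) A^T.

Definition selfadj n (A : 'M[C]_n) : Prop := adj A = A.

Definition psd n (A : 'M[C]_n) : Prop :=
  forall v : 'cV[C]_n, 0 <= (adj v *m A *m v) 0 0.

Definition state n (rho : 'M[C]_n) : Prop := psd rho /\ \tr rho = 1.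

(* H (x) H^* is C^(n*n); basis vector e_i (x) e_j^* has index mxtens_index (i,j) *)
Definition tens n (A B : 'M[C]_n) : 'M[C]_(n * n) :=
  \matrix_(a, b) (A (mxtens_unindex a).1 (mxtens_unindex b).1 *
                  B (mxtens_unindex a).2 (mxtens_unindex b).2).

(* partial trace over H^* (second factor) and over H (first factor) *)
Definition ptr2 n (P : 'M[C]_(n * n)) : 'M[C]_n :=
  \matrix_(i, k) \sum_(j < n) P (mxtens_index (i, j)) (mxtens_index (k, j)).
Definition ptr1 n (P : 'M[C]_(n * n)) : 'M[C]_n :=
  \matrix_(j, l) \sum_(i < n) P (mxtens_index (i, j)) (mxtens_index (i, l)).

(* the transpose A^T on the dual space, in the dual basis, is the matrix transpose *)
Definition coupling n (rho omega : 'M[C]_n) (P : 'M[C]_(n * n)) : Prop :=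
  state P /\ ptr2 P = omega /\ ptr1 P = rho^T.

(* |X|^p for a self-adjoint X, via the spectral decomposition
   X = P^-1 diag(lambda) P (P unitary, lambda real) *)
Definition abspow n (X : 'M[C]_n) (p : R) : 'M[C]_n :=
  invmx (spectralmx X) *m
  diag_mx (map_mx (fun l : C => Complex (powR `|complex.Re l| p) 0) (spectral_diag X))
  *m spectralmx X.

Definition cost n (As : seq 'M[C]_n) (p : R) : 'M[C]_(n * n) :=
  \sum_(A <- As) abspow (tens A 1%:M - tens 1%:M A^T) p.

Definition Dinf n (As : seq 'M[C]_n) (p : R) (rho omega : 'M[C]_n) : R :=
  inf [set x : R | exists P, coupling rho omega P /\
                     x = complex.Re (\tr (P *m cost As p))].

Definition D n (As : seq 'M[C]_n) (p : R) (rho omega : 'M[C]_n) : R :=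
  powR (Dinf As p rho omega) (Num.min (p^-1) 1).

Definition dA n (As : seq 'M[C]_n) (p : R) (rho omega : 'M[C]_n) : R :=
  let e := Num.max p 1 in
  powR (powR (D As p rho omega) e
        - 2^-1 * (powR (D As p rho rho) e + powR (D As p omega omega) e))
       (Num.min (p^-1) 1).

End QOT.

(* Main.v *)
Require Import Defs.
From HB Require Import structures.
From mathcomp Require Import all_boot all_order all_algebra.
From mathcomp Require Import complex mxtens spectral.
From mathcomp Require Import all_classical all_reals.
From mathcomp Require Import exp.
From mathcomp Require Import sequences.
From mathcomp Require Import ring lra.
Set Implicit Arguments. Unset Strict Implicit. Unset Printing Implicit Defensive.
Import Order.TTheory GRing.Theory Num.Theory.
Local Open Scope ring_scope.

Section S.
Variable R : realType.
Local Notation C := (complex R).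

Lemma sum_tens (m n : nat) (F : 'I_(m * n) -> C) :
  \sum_(a < m * n) F a = \sum_(i < m) \sum_(j < n) F (mxtens_index (i, j)).
Proof.
rewrite pair_big /=. apply: reindex => /=.
by exists (@mxtens_unindex m n) => a _; rewrite (mxtens_indexK, mxtens_unindexK) //; case: a.
Qed.

Lemma adjD m n (A B : 'M[C]_(m, n)) : adj (A + B) = adj A + adj B.
Proof. by apply/matrixP => i j; rewrite !mxE rmorphD. Qed.
Lemma adjZ m n c (A : 'M[C]_(m, n)) : adj (c *: A) = Num.conj c *: adj A.
Proof. by apply/matrixP => i j; rewrite !mxE rmorphM. Qed.
Lemma adj_delta n (a : 'I_n) : adj (delta_mx a (0 : 'I_1) : 'M[C]_(n,1)) = delta_mx 0 a.
Proof. by apply/matrixP => i j; rewrite !mxE conjC_nat andbC. Qed.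
Lemma form_delta n (P : 'M[C]_n) a b :
  (delta_mx (0 : 'I_1) a *m P *m delta_mx b (0 : 'I_1)) 0 0 = P a b.
Proof. by rewrite -rowE -colE !mxE. Qed.

Lemma psd_diag n (P : 'M[C]_n) a : psd P -> 0 <= P a a.
Proof.
move=> /(_ (delta_mx a 0)). by rewrite adj_delta form_delta.
Qed.

Lemma qform n (P : 'M[C]_n) (v : 'cV[C]_n) :
  (adj v *m P *m v) 0 0 = \sum_i \sum_j Num.conj (v i 0) * P i j * v j 0.
Proof.
rewrite mxE; under eq_bigr => j _ do rewrite mxE big_distrl /=.
rewrite exchange_big /=; apply: eq_bigr => i _; apply: eq_bigr => j _.
by rewrite !mxE.
Qed.

Definition o0 : 'I_2 := @Ordinal 2 0 isT.
Definition o1 : 'I_2 := @Ordinal 2 1 isT.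
Lemma ord2P (i : 'I_2) : i = o0 \/ i = o1.
Proof. by case: i => [[|[|k]] Hk]; [left; apply: ord_inj|right; apply: ord_inj|]. Qed.
Lemma sum2 (F : 'I_2 -> C) : \sum_(i < 2) F i = F o0 + F o1.
Proof.
rewrite !big_ord_recl big_ord0 addr0; congr (F _ + F _); exact: ord_inj.
Qed.
Lemma sum2R (F : 'I_2 -> R) : \sum_(i < 2) F i = F o0 + F o1.
Proof.
rewrite !big_ord_recl big_ord0 addr0; congr (F _ + F _); exact: ord_inj.
Qed.

Definition Pe (P : 'M[C]_(2 * 2)) i j k l :=
  P (mxtens_index (i, j)) (mxtens_index (k, l)).

Lemma psd_g (P : 'M[C]_(2*2)) (g : 'I_2 -> 'I_2 -> C) : psd P ->
  0 <= \sum_i \sum_j \sum_k \sum_l Num.conj (g i j) * Pe P i j k l * g k l.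
Proof.
move=> /(_ (\col_a g (mxtens_unindex a).1 (mxtens_unindex a).2)).
rewrite qform sum_tens; under eq_bigr => i _ do under eq_bigr => j _ do
  rewrite sum_tens.
by rewrite /Pe; under eq_bigr => i _ do under eq_bigr => j _ do
  under eq_bigr => k _ do under eq_bigr => l _ do rewrite !mxE !mxtens_indexK /=.
Qed.

Lemma cube_cases (l : C) : l ^+ 3 = l -> l = 0 \/ l = 1 \/ l = -1.
Proof.
move=> h; have : l * (l - 1) * (l + 1) == 0.
  have e : l * (l - 1) * (l + 1) = l ^+ 3 - l by ring.
  by rewrite e h subrr.
rewrite !mulf_eq0 subr_eq0 addr_eq0 => /orP[/orP[]|] /eqP ->; tauto.
Qed.

Lemma abspow_diag n (xv : 'rV[C]_n) (p : R) : p != 0 ->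
  (forall a, xv 0 a ^+ 3 = xv 0 a) ->
  abspow (diag_mx xv) p = diag_mx xv *m diag_mx xv.
Proof.
move=> p0 hx; set X := diag_mx xv.
have nX : X \is normalmx.
  apply/normalmxP; rewrite /X tr_diag_mx map_diag_mx; exact: diag_mxC.
have hX := (orthomx_spectralP nX).
rewrite /abspow; set S := spectralmx X in hX *; set d := spectral_diag X in hX *.
have Su : S \in unitmx by exact: spectral_unit.
have X3 : X *m X *m X = X.
  rewrite /X !mulmx_diag; congr diag_mx; apply/rowP => j; rewrite !mxE.
  by rewrite -{4}(hx j) !exprS expr0 mulr1 mulrA.
have D3 : diag_mx d *m diag_mx d *m diag_mx d = diag_mx d.
  have := X3; rewrite hX.
  rewrite !mulmxA !(mulmxK Su) => /(congr1 (fun Y => S *m Y *m invmx S)).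
  by rewrite !mulmxA (mulmxV Su) !mul1mx !(mulmxK Su).
have dj : forall j, d 0 j = 0 \/ d 0 j = 1 \/ d 0 j = -1.
  move=> j; apply: cube_cases.
  have /matrixP /(_ j j) := D3; rewrite !mulmx_diag !mxE eqxx !mulr1n.
  by rewrite !exprS expr0 mulr1 mulrA.
have -> : diag_mx (map_mx (fun l : C => Complex (powR `|complex.Re l| p) 0) d)
   = diag_mx d *m diag_mx d.
  rewrite mulmx_diag; congr diag_mx; apply/rowP => j; rewrite !mxE.
  case: (dj j) => [->|[->|->]] /=.
  - by rewrite normr0 powR0 // mul0r.
  - by rewrite normr1 powR1 mulr1.
  - by rewrite normrN1 powR1 mulrN1 opprK.
by rewrite hX !mulmxA (mulmxK Su).
Qed.

Lemma tidx_eq (i j k l : 'I_2) :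
  (mxtens_index (i, j) == mxtens_index (k, l)) = (i == k) && (j == l).
Proof. by rewrite (inj_eq (can_inj (@mxtens_indexK 2 2))). Qed.
Lemma o01 : (o0 == o1) = false. Proof. by []. Qed.
Lemma o10 : (o1 == o0) = false. Proof. by []. Qed.

Definition Az : 'M[C]_2 := \matrix_(i, j) ((val i == 0%N) && (val j == 0%N))%:R.
Lemma Az_sa : selfadj Az.
Proof. by apply/matrixP => i j; rewrite !mxE conjC_nat andbC. Qed.

Definition xv : 'rV[C]_(2 * 2) := \row_a
  ((val (mxtens_unindex a).1 == 0%N)%:R - (val (mxtens_unindex a).2 == 0%N)%:R).

Lemma X_diag : tens Az 1%:M - tens 1%:M Az^T = diag_mx xv.
Proof.
apply/matrixP => a b.
case: (mxtens_indexP a) => i j; case: (mxtens_indexP b) => k l.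
rewrite !mxE !mxtens_indexK tidx_eq /=.
by case: (ord2P i) => ->; case: (ord2P j) => ->; case: (ord2P k) => ->;
  case: (ord2P l) => ->; rewrite /= ?eqxx ?o01 ?o10 /=; ring.
Qed.

Lemma xv3 a : xv 0 a ^+ 3 = xv 0 a.
Proof.
case: (mxtens_indexP a) => i j; rewrite !mxE mxtens_indexK /=.
by case: (ord2P i) => ->; case: (ord2P j) => ->; rewrite /=; ring.
Qed.

Lemma cost_eq (p : R) : p != 0 -> cost [:: Az] p = diag_mx xv *m diag_mx xv.
Proof.
by move=> p0; rewrite /cost big_seq1 X_diag abspow_diag // => a; exact: xv3.
Qed.

Lemma tr_cost (p : R) (P : 'M[C]_(2 * 2)) : p != 0 ->
  \tr (P *m cost [:: Az] p) = Pe P o0 o1 o0 o1 + Pe P o1 o0 o1 o0.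
Proof.
move=> p0; rewrite cost_eq // mulmx_diag mul_mx_diag /mxtrace sum_tens !sum2.
rewrite !mxE !mxtens_indexK /Pe /=; ring.
Qed.
End S.
Arguments Az {R}.
Arguments xv {R}.

Section S2.
Variable R : realType.
Local Notation C := (complex R).

Lemma psd_rank1 n (u : 'cV[C]_n) : psd (u *m adj u).
Proof.
move=> v; rewrite !mulmxA -(mulmxA (adj v *m u)) [X in 0 <= X]mxE big_ord1.
have -> : (adj v *m u) 0 0 = Num.conj ((adj u *m v) 0 0).
  rewrite !mxE rmorph_sum; apply: eq_bigr => i _; by rewrite !mxE rmorphM /= conjCK mulrC.
have H : forall z w : C, z = w -> 0 <= Num.conj z * w.
  by move=> z w ->; rewrite mulrC; exact: mul_conjC_ge0.
exact: H.
Qed.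

Lemma psd_scale n (c : C) (A : 'M[C]_n) : 0 <= c -> psd A -> psd (c *: A).
Proof.
move=> c0 hA v; rewrite -scalemxAr -scalemxAl mxE; exact: mulr_ge0.
Qed.

Local Open Scope complex_scope.
Definition hC : C := (2^-1 : R)%:C.
Definition qC : C := (4^-1 : R)%:C.
Lemma hh : hC + hC = 1.
Proof. rewrite /hC -rmorphD /=. have -> : (2^-1 + 2^-1 : R) = 1 by lra. by []. Qed.
Lemma qq : qC + qC = hC.
Proof. rewrite /hC /qC -rmorphD /=. have -> : (4^-1 + 4^-1 : R) = 2^-1 by lra. by []. Qed.
Lemma hC_ge0 : 0 <= hC. Proof. rewrite /hC ler0c; lra. Qed.
Lemma qC_ge0 : 0 <= qC. Proof. rewrite /qC ler0c; lra. Qed.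
Lemma Re_hC : complex.Re hC = 2^-1. Proof. by []. Qed.
Lemma Re_qC : complex.Re qC = 4^-1. Proof. by []. Qed.

Local Close Scope complex_scope.
Ltac smp := rewrite ?mxE ?eqxx ?o01 ?o10 ?andbT ?andbF ?andTb ?andFb; cbv iota beta;
  rewrite ?conjC0 ?conjC1 ?mul0r ?mulr0 ?mulr1 ?mul1r ?add0r ?addr0 ?hh ?qq.
Definition rho0 : 'M[C]_2 := \matrix_(i, j) if (i == o0) && (j == o0) then 1 else 0.
Definition rho1 : 'M[C]_2 := \matrix_(i, j) if (i == o1) && (j == o1) then 1 else 0.
Definition tau : 'M[C]_2 := \matrix_(i, j) hC.

Lemma tr2 (M : 'M[C]_2) : \tr M = M o0 o0 + M o1 o1.
Proof. by rewrite /mxtrace sum2. Qed.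

Lemma state_rho0 : state rho0.
Proof.
split; last by rewrite tr2 /rho0; smp.
have -> : rho0 = (\col_i (if i == o0 then 1 else 0 : C)) *m adj (\col_i (if i == o0 then 1 else 0 : C)).
  apply/matrixP => i j; rewrite !mxE big_ord1 !mxE.
  by case: (ord2P i) => ->; case: (ord2P j) => ->; smp.
exact: psd_rank1.
Qed.
Lemma state_rho1 : state rho1.
Proof.
split; last by rewrite tr2 /rho1; smp.
have -> : rho1 = (\col_i (if i == o1 then 1 else 0 : C)) *m adj (\col_i (if i == o1 then 1 else 0 : C)).
  apply/matrixP => i j; rewrite !mxE big_ord1 !mxE.
  by case: (ord2P i) => ->; case: (ord2P j) => ->; smp.
exact: psd_rank1.
Qed.
Lemma state_tau : state tau.
Proof.
split; last by rewrite tr2 !mxE hh.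
have -> : tau = hC *: ((\col_i (1 : C)) *m adj (\col_i (1 : C))).
  by apply/matrixP => i j; rewrite !mxE big_ord1 !mxE rmorph1 mulr1 mulr1.
apply: psd_scale; [exact: hC_ge0 | exact: psd_rank1].
Qed.

Definition uvec (g : 'I_2 -> 'I_2 -> C) : 'cV[C]_(2 * 2) :=
  \col_a g (mxtens_unindex a).1 (mxtens_unindex a).2.
Definition cpl (c : C) g : 'M[C]_(2 * 2) := c *: (uvec g *m adj (uvec g)).

Lemma Pe_cpl c g i j k l : Pe (cpl c g) i j k l = c * (g i j * Num.conj (g k l)).
Proof. by rewrite /Pe /cpl !mxE big_ord1 !mxE !mxtens_indexK. Qed.

Lemma trPe (P : 'M[C]_(2 * 2)) :
  \tr P = Pe P o0 o0 o0 o0 + Pe P o0 o1 o0 o1 + Pe P o1 o0 o1 o0 + Pe P o1 o1 o1 o1.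
Proof. by rewrite /mxtrace sum_tens !sum2 /Pe addrA. Qed.

Lemma ptr2E (P : 'M[C]_(2 * 2)) i k : ptr2 P i k = Pe P i o0 k o0 + Pe P i o1 k o1.
Proof. by rewrite mxE sum2. Qed.
Lemma ptr1E (P : 'M[C]_(2 * 2)) j l : ptr1 P j l = Pe P o0 j o0 l + Pe P o1 j o1 l.
Proof. by rewrite mxE sum2. Qed.

Lemma psd_cpl c g : 0 <= c -> psd (cpl c g).
Proof. by move=> c0; apply: psd_scale => //; exact: psd_rank1. Qed.

Definition costR (P : 'M[C]_(2 * 2)) := complex.Re (Pe P o0 o1 o0 o1 + Pe P o1 o0 o1 o0).

Lemma Dinf_eq (p : R) rho om (v : R) : p != 0 ->
  (forall P, coupling rho om P -> v <= costR P) ->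
  (exists P, coupling rho om P /\ costR P = v) ->
  Dinf [:: Az] p rho om = v.
Proof.
move=> p0 hlb [P0 [hP0 hv]]; rewrite /Dinf.
match goal with |- inf ?T = _ => set S := T end.
have lbS : lbound S v by move=> y [P [hP ->]]; rewrite tr_cost //; exact: hlb.
have vS : S v by exists P0; split => //; rewrite tr_cost.
apply/eqP; rewrite eq_le; apply/andP; split.
  by apply: (ge_inf (ex_intro _ v lbS)).
by apply: lb_le_inf => //; exists v.
Qed.

Lemma ReD (x y : C) : complex.Re (x + y) = complex.Re x + complex.Re y.
Proof. by case: x; case: y. Qed.

Lemma cpl_facts (rho om : 'M[C]_2) (P : 'M[C]_(2 * 2)) : coupling rho om P ->
 [/\ forall i k, Pe P i o0 k o0 + Pe P i o1 k o1 = om i k,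
     forall j l, Pe P o0 j o0 l + Pe P o1 j o1 l = rho l j,
     forall i j, 0 <= complex.Re (Pe P i j i j) & psd P].
Proof.
move=> [[hpsd _] [h2 h1]]; split => //.
- by move=> i k; rewrite -ptr2E h2.
- by move=> j l; rewrite -ptr1E h1 mxE.
- move=> i j; have := psd_diag (mxtens_index (i, j)) hpsd.
  by rewrite lecE => /andP[_].
Qed.


Definition g10 (i j : 'I_2) : C := if (i == o1) && (j == o0) then 1 else 0.

Lemma D01 (p : R) : p != 0 -> Dinf [:: Az] p rho0 rho1 = 1.
Proof.
move=> p0; apply: Dinf_eq => //.
  move=> P /cpl_facts [h2 h1 hd _].
  have e1 := congr1 (@complex.Re R) (h2 o1 o1); have e2 := congr1 (@complex.Re R) (h1 o1 o1).
  move: e1 e2; rewrite /costR !ReD !mxE /=.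
  have := hd o0 o1; have := hd o1 o1; have := hd o1 o0; lra.
exists (cpl 1 g10); split; last by rewrite /costR !Pe_cpl /g10; smp.
split; [split|split].
- by apply: psd_cpl; exact: ler01.
- by rewrite trPe !Pe_cpl /g10; smp.
- apply/matrixP => i k; rewrite ptr2E !Pe_cpl /g10 /rho1.
  by case: (ord2P i) => ->; case: (ord2P k) => ->; smp.
- apply/matrixP => i k; rewrite ptr1E !Pe_cpl /g10 /rho0.
  by case: (ord2P i) => ->; case: (ord2P k) => ->; smp.
Qed.

Definition g00 (i j : 'I_2) : C := if (i == o0) && (j == o0) then 1 else 0.
Definition g11 (i j : 'I_2) : C := if (i == o1) && (j == o1) then 1 else 0.
Definition gj0 (i j : 'I_2) : C := if j == o0 then 1 else 0.
Definition gi1 (i j : 'I_2) : C := if i == o1 then 1 else 0.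
Definition gall (i j : 'I_2) : C := 1.

Lemma D00 (p : R) : p != 0 -> Dinf [:: Az] p rho0 rho0 = 0.
Proof.
move=> p0; apply: Dinf_eq => //.
  move=> P /cpl_facts [h2 h1 hd _]; rewrite /costR ReD.
  have := hd o0 o1; have := hd o1 o0; lra.
exists (cpl 1 g00); split; last by rewrite /costR !Pe_cpl /g00; smp.
split; [split|split].
- by apply: psd_cpl; exact: ler01.
- by rewrite trPe !Pe_cpl /g00; smp.
- apply/matrixP => i k; rewrite ptr2E !Pe_cpl /g00 /rho0.
  by case: (ord2P i) => ->; case: (ord2P k) => ->; smp.
- apply/matrixP => i k; rewrite ptr1E !Pe_cpl /g00 /rho0.
  by case: (ord2P i) => ->; case: (ord2P k) => ->; smp.
Qed.

Lemma D11 (p : R) : p != 0 -> Dinf [:: Az] p rho1 rho1 = 0.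
Proof.
move=> p0; apply: Dinf_eq => //.
  move=> P /cpl_facts [h2 h1 hd _]; rewrite /costR ReD.
  have := hd o0 o1; have := hd o1 o0; lra.
exists (cpl 1 g11); split; last by rewrite /costR !Pe_cpl /g11; smp.
split; [split|split].
- by apply: psd_cpl; exact: ler01.
- by rewrite trPe !Pe_cpl /g11; smp.
- apply/matrixP => i k; rewrite ptr2E !Pe_cpl /g11 /rho1.
  by case: (ord2P i) => ->; case: (ord2P k) => ->; smp.
- apply/matrixP => i k; rewrite ptr1E !Pe_cpl /g11 /rho1.
  by case: (ord2P i) => ->; case: (ord2P k) => ->; smp.
Qed.

Lemma D0t (p : R) : p != 0 -> Dinf [:: Az] p rho0 tau = 2^-1.
Proof.
move=> p0; apply: Dinf_eq => //.
  move=> P /cpl_facts [h2 h1 hd _].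
  have e1 := congr1 (@complex.Re R) (h2 o1 o1); have e2 := congr1 (@complex.Re R) (h1 o1 o1).
  move: e1 e2; rewrite /costR !ReD /tau /rho0; smp; rewrite Re_hC /=.
  have := hd o0 o1; have := hd o1 o1; have := hd o1 o0; lra.
exists (cpl hC gj0); split; last by rewrite /costR !Pe_cpl /gj0; smp.
split; [split|split].
- by apply: psd_cpl; exact: hC_ge0.
- by rewrite trPe !Pe_cpl /gj0; smp.
- apply/matrixP => i k; rewrite ptr2E !Pe_cpl /gj0 /tau.
  by case: (ord2P i) => ->; case: (ord2P k) => ->; smp.
- apply/matrixP => i k; rewrite ptr1E !Pe_cpl /gj0 /rho0.
  by case: (ord2P i) => ->; case: (ord2P k) => ->; smp.
Qed.

Lemma Dt1 (p : R) : p != 0 -> Dinf [:: Az] p tau rho1 = 2^-1.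
Proof.
move=> p0; apply: Dinf_eq => //.
  move=> P /cpl_facts [h2 h1 hd _].
  have e1 := congr1 (@complex.Re R) (h2 o0 o0); have e2 := congr1 (@complex.Re R) (h1 o0 o0).
  move: e1 e2; rewrite /costR !ReD /tau /rho1; smp; rewrite Re_hC /=.
  have := hd o0 o1; have := hd o0 o0; have := hd o1 o0; lra.
exists (cpl hC gi1); split; last by rewrite /costR !Pe_cpl /gi1; smp.
split; [split|split].
- by apply: psd_cpl; exact: hC_ge0.
- by rewrite trPe !Pe_cpl /gi1; smp.
- apply/matrixP => i k; rewrite ptr2E !Pe_cpl /gi1 /rho1.
  by case: (ord2P i) => ->; case: (ord2P k) => ->; smp.
- apply/matrixP => i k; rewrite ptr1E !Pe_cpl /gi1 /tau.
  by case: (ord2P i) => ->; case: (ord2P k) => ->; smp.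
Qed.

Lemma ReSum (I : finType) (F : I -> C) :
  complex.Re (\sum_i F i) = \sum_i complex.Re (F i).
Proof. by apply: (big_morph _ ReD). Qed.

Lemma Re_form (x y : R) (z : C) :
  complex.Re (Num.conj (x%:C)%C * z * (y%:C)%C) = x * complex.Re z * y.
Proof. by case: z => a b /=; ring. Qed.

Lemma psd_gr (P : 'M[C]_(2 * 2)) (gr : 'I_2 -> 'I_2 -> R) : psd P ->
  0 <= \sum_i \sum_j \sum_k \sum_l gr i j * complex.Re (Pe P i j k l) * gr k l.
Proof.
move=> /(psd_g (fun i j => (gr i j)%:C%C)); rewrite lecE => /andP[_] H.
apply: le_trans H _; rewrite le_eqVlt; apply/orP; left; apply/eqP.
rewrite ReSum; apply: eq_bigr => i _; rewrite ReSum; apply: eq_bigr => j _.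
rewrite ReSum; apply: eq_bigr => k _; rewrite ReSum; apply: eq_bigr => l _.
by rewrite Re_form.
Qed.

Definition gv (t : R) (i j : 'I_2) : R :=
  if (i == o0) && (j == o0) then t else if (i == o1) && (j == o0) then -1 else 0.
Definition gw (t : R) (i j : 'I_2) : R :=
  if (i == o1) && (j == o1) then t else if (i == o0) && (j == o1) then -1 else 0.

Lemma Dtt (p : R) : p != 0 -> Dinf [:: Az] p tau tau = 2^-1.
Proof.
move=> p0; apply: Dinf_eq => //.
  move=> P /cpl_facts [h2 h1 hd hpsd].
  have e1 := congr1 (@complex.Re R) (h2 o0 o0); have e2 := congr1 (@complex.Re R) (h2 o1 o1).
  have e3 := congr1 (@complex.Re R) (h2 o0 o1); have e4 := congr1 (@complex.Re R) (h2 o1 o0).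
  have e5 := congr1 (@complex.Re R) (h1 o0 o0); have e6 := congr1 (@complex.Re R) (h1 o1 o1).
  move: e1 e2 e3 e4 e5 e6; rewrite /costR !ReD /tau; smp; rewrite !Re_hC.
  set a := complex.Re (Pe P o0 o0 o0 o0); set b := complex.Re (Pe P o0 o1 o0 o1).
  set c := complex.Re (Pe P o1 o0 o1 o0); set d := complex.Re (Pe P o1 o1 o1 o1).
  set X := complex.Re (Pe P o0 o0 o1 o0); set Y := complex.Re (Pe P o0 o1 o1 o1).
  set X' := complex.Re (Pe P o1 o0 o0 o0); set Y' := complex.Re (Pe P o1 o1 o0 o1).
  move=> e1 e2 e3 e4 e5 e6.
  case: (lerP (2^-1) (b + c)) => // hlt; suff : False by [].
  have ha : 4^-1 < a by lra.
  have a0 : a != 0 by apply/eqP => a0; move: ha; rewrite a0; lra.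
  set t := (4 * a)^-1.
  have Hv := psd_gr (gv t) hpsd; have Hw := psd_gr (gw t) hpsd.
  move: Hv Hw; rewrite !sum2R /gv /gw; smp.
  rewrite -/a -/b -/c -/d -/X -/Y -/X' -/Y' => Hv Hw.
  have S0 : 0 <= 2 * a * t ^+ 2 - t + 1 - 2 * a.
    have hd' : d = a by lra.
    move: Hv Hw; rewrite hd' expr2; nra.
  have := mulr_ge0 (_ : 0 <= 8 * a) S0.
  have -> : 8 * a * (2 * a * t ^+ 2 - t + 1 - 2 * a) = - (4 * a - 1) ^+ 2.
    by rewrite /t; field.
  have : 0 < (4 * a - 1) ^+ 2 by apply: exprn_gt0; lra.
  move=> h1' h2'; have : 0 <= 8 * a by lra.
  move=> /h2'; lra.
exists (cpl qC gall); split; last by rewrite /costR !Pe_cpl /gall; smp.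
split; [split|split].
- by apply: psd_cpl; exact: qC_ge0.
- by rewrite trPe !Pe_cpl /gall; smp; rewrite -addrA qq hh.
- apply/matrixP => i k; rewrite ptr2E !Pe_cpl /gall /tau.
  by case: (ord2P i) => ->; case: (ord2P k) => ->; smp.
- apply/matrixP => i k; rewrite ptr1E !Pe_cpl /gall /tau.
  by case: (ord2P i) => ->; case: (ord2P k) => ->; smp.
Qed.
End S2.

Section S3.
Variable R : realType.

Lemma key (q : R) : 2^-1 < q -> 2 * powR (4^-1) q < 1.
Proof.
move=> hq.
have e4 : (4^-1 : R) = powR (2^-1) 2.
  rewrite powR_mulrn; last lra.
  by rewrite expr2 -invfM -natrM.
have h0 : (2^-1 : R) != 0 by apply/eqP; lra.
rewrite e4 -powRrM /powR (negPf h0).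
have L : ln (2^-1 : R) < 0 by apply: ln_lt0; lra.
have : expR (2 * q * ln (2^-1 : R)) < expR (ln (2^-1 : R)) by rewrite ltr_expR; nra.
rewrite lnK ?posrE; lra.
Qed.

Lemma qe1 (p : R) : 0 < p -> Num.min p^-1 1 * Num.max p 1 = 1.
Proof.
move=> hp; case: (lerP p 1) => h.
  rewrite (min_r (_ : 1 <= p^-1)) ?(max_r h) ?mulr1 //.
  by rewrite invf_ge1.
rewrite (min_l (_ : p^-1 <= 1)) ?(max_l (ltW h)) ?mulVf //.
  by apply/eqP; lra.
by rewrite invf_le1 //; lra.
Qed.

Lemma qhalf (p : R) : 0 < p -> p < 2 -> 2^-1 < Num.min p^-1 1.
Proof.
move=> hp hp2; rewrite lt_min; apply/andP; split; last lra.
rewrite -[X in X < _]invrK ltf_pV2 ?posrE //; lra.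
Qed.

Lemma De (p I : R) : 0 < p -> 0 <= I ->
  powR (powR I (Num.min p^-1 1)) (Num.max p 1) = I.
Proof. by move=> hp hI; rewrite -powRrM qe1 // powRr1. Qed.
End S3.

Unset Implicit Arguments.

Theorem proposition6p3 (R : realType) (p : R) (hp0 : 0 < p) (hp2 : p < 2) :
  exists (n : nat) (As : seq 'M[complex R]_n) (rho tau omega : 'M[complex R]_n),
    (forall A, A \in As -> selfadj A) /\
    state rho /\ state tau /\ state omega /\
    dA As p rho omega > dA As p rho tau + dA As p tau omega.
Proof.
have p0 : p != 0 by apply/eqP; lra.
exists 2, [:: Az], (@rho0 R), (@tau R), (@rho1 R).
split; first by move=> A; rewrite inE => /eqP ->; exact: Az_sa.
split; first exact: state_rho0.
split; first exact: state_tau.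
split; first exact: state_rho1.
rewrite /dA /D D01 // D00 // D11 // D0t // Dtt // Dt1 //.
rewrite !De //; try lra.
have -> : 1 - 2^-1 * (0 + 0) = 1 :> R by ring.
have -> : 2^-1 - 2^-1 * (0 + 2^-1) = 4^-1 :> R by field.
have -> : 2^-1 - 2^-1 * (2^-1 + 0) = 4^-1 :> R by field.
rewrite powR1.
have := key (qhalf hp0 hp2); lra.
Qed.
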